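(* Let $n\ge2$ be an integer, $t\in(0,1/2]$ and $\lambda>0$. Then $$\big(t+(1-t)\lambda^{1-n}\big)\big(t+(1-t)\lambda\big)^{n-1}-1\ge\frac{t}{8}\log^2(\lambda).$$ *)

(* Defs.v *)
From Stdlib Require Import Reals.

(* Main.v *)
Require Import Defs.
From Stdlib Require Import Reals ZArith Lra Lia.
Open Scope R_scope.

Lemma pow_ge1 (y : R) (k : nat) : 1 <= y -> 1 <= y ^ k.
Proof. intros; induction k; simpl; nra. Qed.

Lemma pow_le1 (y : R) (k : nat) : 0 < y -> y <= 1 -> 0 < y ^ k <= 1.
Proof. intros; induction k; simpl; nra. Qed.

Lemma step (t y : R) (k : nat) : 0 < t -> t <= 1/2 -> 0 < y ->
  (t + (1 - t) * / y ^ k) * (t + (1-t)*y) ^ k <=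
  (t + (1 - t) * / y ^ (S k)) * (t + (1-t)*y) ^ (S k).
Proof.
  intros ht0 ht1 hy.
  assert (ha : 0 < t + (1-t)*y) by nra.
  assert (hak : 0 < (t + (1-t)*y) ^ k) by (apply pow_lt; lra).
  assert (hyk : 0 < y ^ k) by (apply pow_lt; lra).
  set (z := / y ^ k).
  assert (hz : 0 < z) by (apply Rinv_0_lt_compat; lra).
  assert (e : / y ^ S k = z / y).
  { unfold z; simpl; field; split; lra. }
  rewrite e. simpl.
  assert (key : (y - 1) * (y - z) >= 0).
  { destruct (Rle_dec 1 y) as [h|h].
    - pose proof (pow_ge1 y k h). assert (z <= 1).
      { unfold z. rewrite <- Rinv_1. apply Rinv_le_contravar; lra. }
      nra.
    - pose proof (pow_le1 y k hy ltac:(lra)). assert (1 <= z).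
      { unfold z. rewrite <- Rinv_1. apply Rinv_le_contravar; lra. }
      nra. }
  assert (d : (t + (1 - t) * (z / y)) * (t + (1-t)*y) - (t + (1 - t) * z)
              = t * (1-t) * ((y-1)*(y-z)) / y) by (field; lra).
  assert (0 <= t * (1-t) * ((y-1)*(y-z)) / y).
  { apply Rmult_le_pos; [|left; apply Rinv_0_lt_compat; lra].
    apply Rmult_le_pos; nra. }
  nra.
Qed.

Lemma mono (t y : R) (k : nat) : 0 < t -> t <= 1/2 -> 0 < y ->
  (t + (1 - t) * / y ^ 1) * (t + (1-t)*y) ^ 1 <=
  (t + (1 - t) * / y ^ (S k)) * (t + (1-t)*y) ^ (S k).
Proof.
  intros; induction k; [lra|]. eapply Rle_trans; [apply IHk|apply step]; lra.
Qed.

Lemma cosh_bound (x : R) : 0 <= x -> exp x + exp (-x) - 2 >= x ^ 2 / 4.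
Proof.
  intros hx.
  pose proof (exp_ineq1_le (x/2)). pose proof (exp_ineq1_le (-x)).
  assert (exp x = exp (x/2) * exp (x/2)) by (rewrite <- exp_plus; f_equal; lra).
  nra.
Qed.

Lemma base (t y : R) : 0 < t -> t <= 1/2 -> 0 < y ->
  (t + (1 - t) * / y ^ 1) * (t + (1-t)*y) ^ 1 - 1 >= t / 8 * (ln y) ^ 2.
Proof.
  intros ht0 ht1 hy.
  assert (e : (t + (1 - t) * / y ^ 1) * (t + (1-t)*y) ^ 1 - 1
     = t * (1-t) * (y + / y - 2)) by (field; lra).
  rewrite e.
  set (x := ln y).
  assert (ey : y = exp x) by (unfold x; rewrite exp_ln; lra).
  assert (ei : / y = exp (- x)) by (rewrite ey, exp_Ropp; reflexivity).
  rewrite ei. rewrite ey at 1.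
  assert (h : exp x + exp (-x) - 2 >= x ^ 2 / 4).
  { destruct (Rle_dec 0 x).
    - apply cosh_bound; lra.
    - pose proof (cosh_bound (-x) ltac:(lra)). rewrite Ropp_involutive in H.
      replace (x^2) with ((-x)^2) by ring. lra. }
  assert (0 <= x^2) by (apply pow2_ge_0).
  set (c := exp x + exp (-x) - 2) in *.
  assert (t * (1-t) * c >= t * (1/2) * (x^2/4)).
  { apply Rle_ge. apply Rmult_le_compat; nra. }
  lra.
Qed.

Theorem mainTheorem16 (n : nat) (t lambda : R)
  (hn : (2 <= n)%nat) (ht0 : 0 < t) (ht1 : t <= 1/2) (hl : 0 < lambda) :
  (t + (1 - t) * powerRZ lambda (1 - Z.of_nat n)%Z) * (t + (1 - t) * lambda) ^ (n - 1) - 1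
  >= t / 8 * (ln lambda) ^ 2.
Proof.
  destruct n as [|[|k]]; try lia.
  assert (ez : (1 - Z.of_nat (S (S k)))%Z = Z.neg (Pos.of_succ_nat k)).
  { rewrite <- Pos2Z.opp_pos, Zpos_P_of_succ_nat. lia. }
  rewrite ez. simpl powerRZ. rewrite SuccNat2Pos.id_succ.
  replace (S (S k) - 1)%nat with (S k) by lia.
  pose proof (mono t lambda k ht0 ht1 hl).
  pose proof (base t lambda ht0 ht1 hl).
  lra.
Qed.
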